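(* Let $k\geq 2$ be an integer. If $G$ is a cactus on $n$ vertices, then $\alpha_k(G)\geq \Big\lfloor\frac{k}{k+1}\,n\Big\rfloor+1$.
   Context: All graphs are finite and simple, with nonempty vertex set. For a graph $G$, a $k$-sparse set is a set of vertices inducing a subgraph of maximum degree at most $k$, and $\alpha_k(G)$ denotes the maximum size of a $k$-sparse set in $G$. A cactus is a graph (not necessarily connected) in which every block is a cycle, a single edge, or a single vertex. *)

(* Defs.v *)
From mathcomp Require Import all_boot.
Set Implicit Arguments. Unset Strict Implicit. Unset Printing Implicit Defensive.

Section Graphs.
Variables (T : finType) (e : rel T).

Definition simple_graph : Prop := symmetric e /\ irreflexive e.

Definition nbhd_in (S : {set T}) (v : T) : {set T} := [set u in S | e v u].

Definition induced_rel (S : {set T}) : rel T :=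
  [rel x y | [&& x \in S, y \in S & e x y]].

(* S induces a connected subgraph (the empty set counts as connected) *)
Definition connected_set (S : {set T}) : Prop :=
  forall x y, x \in S -> y \in S -> connect (induced_rel S) x y.

Definition nonseparable (S : {set T}) : Prop :=
  S != set0 /\ connected_set S /\ (forall v, v \in S -> connected_set (S :\ v)).

Definition block (B : {set T}) : Prop :=
  nonseparable B /\ (forall C : {set T}, B \subset C -> nonseparable C -> C = B).

Definition induces_cycle (S : {set T}) : Prop :=
  3 <= #|S| /\ connected_set S /\ (forall v, v \in S -> #|nbhd_in S v| = 2).

Definition induces_edge (S : {set T}) : Prop :=
  exists x y, [/\ x != y, e x y & S = [set x; y]].
Definition induces_vertex (S : {set T}) : Prop := exists x, S = [set x].

Definition cactus : Prop :=
  forall B : {set T}, block B -> [\/ induces_cycle B, induces_edge B | induces_vertex B].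

Definition k_sparse (k : nat) (S : {set T}) : bool :=
  [forall v in S, #|nbhd_in S v| <= k].

Definition alpha_k (k : nat) : nat := \max_(S : {set T} | k_sparse k S) #|S|.

End Graphs.

(* Main.v *)
Require Import Defs.
From mathcomp Require Import all_boot zify.
From Stdlib Require Import Classical.
Set Implicit Arguments. Unset Strict Implicit. Unset Printing Implicit Defensive.

Ltac clean := repeat match goal with
 | H : is_true (_ \in _) |- _ => clear H
 | H : is_true (_ \notin _) |- _ => clear H
 | H : is_true (_ != _) |- _ => clear H
 | H : is_true (_ \subset _) |- _ => clear H
 | H : is_true (_ \proper _) |- _ => clear H
 end.

Section Conn.
Variables (T : finType) (e : rel T).
Hypothesis esym : symmetric e.
Hypothesis eirr : irreflexive e.

Lemma inducedE (S : {set T}) a b :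
  induced_rel e S a b = [&& a \in S, b \in S & e a b].
Proof. by []. Qed.

Lemma induced_sym (S : {set T}) : symmetric (induced_rel e S).
Proof. by move=> a b; rewrite /induced_rel /= esym andbCA. Qed.

Lemma conn_sym (S : {set T}) a b : connect (induced_rel e S) a b = connect (induced_rel e S) b a.
Proof. exact: (sym_connect_sym (@induced_sym S)). Qed.

Lemma conn_mono (S1 S2 : {set T}) : S1 \subset S2 ->
  forall a b, connect (induced_rel e S1) a b -> connect (induced_rel e S2) a b.
Proof.
move=> sS; apply: connect_sub => a b; rewrite inducedE => /and3P [aS bS eab].
by apply: connect1; rewrite inducedE (subsetP sS _ aS) (subsetP sS _ bS).
Qed.

Lemma conn_edge (S : {set T}) a b : a \in S -> b \in S -> e a b -> connect (induced_rel e S) a b.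
Proof. by move=> aS bS eab; apply: connect1; rewrite inducedE aS bS. Qed.

Lemma conn_closed (S C : {set T}) p q :
  (forall a b, a \in C -> induced_rel e S a b -> b \in C) -> p \in C ->
  connect (induced_rel e S) p q -> connect (induced_rel e C) p q.
Proof.
move=> Hcl pC /connectP [s Hp ->] {q}.
elim: s p pC Hp => [|b s IH] p pC /=; first by rewrite connect0.
move=> /andP [Hpb Hp]; have bC := Hcl _ _ pC Hpb.
apply: connect_trans (IH _ bC Hp); apply: connect1.
by move: Hpb; rewrite !inducedE pC bC => /and3P [_ _ ->].
Qed.

Lemma conn_exit (S : {set T}) (P : {set T}) p q :
  connect (induced_rel e S) p q -> p \in P -> q \notin P ->
  exists a b, [/\ connect (induced_rel e (S :&: P)) p a, a \in S :&: P,
                  b \in S, b \notin P & e a b].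
Proof.
move=> /connectP [s Hp ->] {q}.
elim: s p Hp => [|b s IH] p /=; first by move=> _ ->.
move=> /andP []; rewrite inducedE => /and3P [pS bS epb] Hp pP lP.
case bP: (b \in P).
  have [a [c [H1 H2 H3 H4 H5]]] := IH _ Hp bP lP.
  exists a, c; split=> //; apply: connect_trans H1.
  by apply: conn_edge; rewrite // inE ?pS ?bS.
by exists p, b; split; rewrite ?connect0 ?inE ?pS ?pP ?bP.
Qed.

Lemma conn_add x (Y : {set T}) w : connected_set e Y -> w \in Y -> e x w ->
  connected_set e (x |: Y).
Proof.
move=> cY wY exw.
have H : forall a, a \in x |: Y -> connect (induced_rel e (x |: Y)) a w.
  move=> a; rewrite !inE => /orP [/eqP -> | aY].
    by apply: conn_edge; rewrite // !inE ?eqxx ?wY ?orbT.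
  by apply: (conn_mono (subsetUr _ _)); apply: cY.
move=> a b aS bS; apply: connect_trans (H _ aS) _.
by rewrite conn_sym; apply: H.
Qed.

Lemma connected_from (S : {set T}) z : z \in S ->
  (forall a, a \in S -> connect (induced_rel e S) a z) -> connected_set e S.
Proof.
move=> zS H a b aS bS; apply: connect_trans (H _ aS) _.
by rewrite conn_sym; apply: H.
Qed.


Lemma block_exists_n n (S : {set T}) : #|T| - #|S| < n -> nonseparable e S ->
  exists B, block e B /\ S \subset B.
Proof.
elim: n S => [//|n IH] S Hn nS.
case: (classic (exists C : {set T}, S \subset C /\ nonseparable e C /\ C <> S)).
  move=> [C [sSC [nC neq]]].
  have pr : S \proper C.
    by rewrite properEneq sSC andbT; apply/eqP => E; apply: neq; rewrite E.
  have h2 := proper_card pr; have h1 : #|C| <= #|T| := max_card _.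
  have : #|T| - #|C| < n.
    clean; lia.
  move=> Hc; have [B [bB sCB]] := IH C Hc nC.
  by exists B; split=> //; apply: subset_trans sSC sCB.
move=> H; exists S; split=> //; split=> // C sC nC.
by apply: NNPP => neq; apply: H; exists C.
Qed.

Lemma block_exists (S : {set T}) : nonseparable e S ->
  exists B, block e B /\ S \subset B.
Proof. by apply: (@block_exists_n #|T|.+1); clean; lia. Qed.

Lemma nbhd_mono (A B : {set T}) v : A \subset B -> nbhd_in e A v \subset nbhd_in e B v.
Proof.
move=> sAB; apply/subsetP => u; rewrite !inE => /andP [uA ->].
by rewrite (subsetP sAB _ uA).
Qed.

Hypothesis cac : cactus e.

Lemma Fprop_n n x (W : {set T}) : #|W| < n -> x \notin W -> connected_set e W ->
  #|nbhd_in e W x| <= 2.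
Proof.
elim: n W => [//|n IH] W Hn xW cW.
rewrite leqNgt; apply/negP => H3.
have nS : nonseparable e (x |: W).
  split; first by apply/set0Pn; exists x; rewrite !inE eqxx.
  split.
    have [w] : exists w, w \in nbhd_in e W x by apply/set0Pn; rewrite -card_gt0; clean; lia.
    rewrite inE => /andP [wW exw].
    exact: conn_add wW exw.
  move=> z; rewrite !inE => /orP [/eqP -> | zW].
    by rewrite setU1K.
  have zx : z != x by apply: contraNneq xW => <-.
  apply: (@connected_from _ x); first by rewrite !inE eqxx andbT eq_sym.
  move=> a aY; case Ha: (connect _ a x) => //; exfalso.
  have aW : a \in W :\ z.
    move: aY; rewrite !inE => /andP [-> /orP [/eqP ax|->//]].
    by move: Ha; rewrite ax connect0.
  pose K := [set u in W :\ z | connect (induced_rel e (W :\ z)) a u].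
  have aK : a \in K by rewrite inE aW connect0.
  have zK : z \notin K by rewrite !inE eqxx.
  have sWY : W :\ z \subset (x |: W) :\ z.
    by apply/subsetP => u; rewrite !inE => /andP [-> ->]; rewrite orbT.
  have xK : forall u, u \in W -> e x u -> u \notin K.
    move=> u uW exu; apply/negP; rewrite inE => /andP [uWz cau].
    move: Ha; rewrite (connect_trans (conn_mono sWY cau)) //.
    apply: conn_edge; [exact: (subsetP sWY) | by rewrite !inE eqxx eq_sym zx | by rewrite esym].
  have Kclosed : forall u b, u \in K -> b \in W :\ z -> e u b -> b \in K.
    move=> u b; rewrite inE => /andP [uW cau] bW eub.
    by rewrite inE bW (connect_trans cau) // conn_edge.
  pose W' := W :\: K.
  have xW' : x \notin W' by rewrite /W' inE (negbTE xW) andbF.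
  have cardW' : #|W'| < n.
    have := cardsD W K; have : 1 <= #|W :&: K|.
      by rewrite card_gt0; apply/set0Pn; exists a; rewrite inE aK andbT; move: aW; rewrite inE => /andP [].
    have : 1 <= #|W| by rewrite card_gt0; apply/set0Pn; exists z.
    rewrite -/W'; clean; lia.
  have nbE : nbhd_in e W' x = nbhd_in e W x.
    apply/setP => u; rewrite !inE; apply/andP/andP => [[/andP [_ uW] exu]|[uW exu]].
      by split.
    by split=> //; rewrite uW andbT; move: (xK u uW exu); rewrite /K !inE uW.
  have cW' : connected_set e W'.
    have zW' : z \in W' by rewrite inE zK zW.
    apply: (connected_from zW') => p pW'.
    case pz: (p == z); first by rewrite (eqP pz) connect0.
    have pW : p \in W by move: pW'; rewrite inE => /andP [].
    have pP : p \in W' :\ z by rewrite in_setD1 pz pW'.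
    have zP : z \notin W' :\ z by rewrite in_setD1 eqxx.
    have [a0 [b [H1 H2 H4 H5 H6]]] := @conn_exit W (W' :\ z) p z (cW _ _ pW zW) pP zP.
    have a0P : a0 \in W' :\ z by move: H2; rewrite inE => /andP [].
    have a0W : a0 \in W :\ z.
      by move: a0P; rewrite !inE => /andP [-> /andP [_ ->]].
    have bz : b = z.
      apply/eqP; apply: contraNT H5 => bz; rewrite !inE bz /=.
      apply/andP; split=> //; apply/negP => bK.
      have bK' : b \in K by rewrite /K inE in_setD1 bz /=.
      have : a0 \in K by apply: (Kclosed b a0 bK' a0W); rewrite esym.
      by move=> a0K; move: a0P; rewrite in_setD1 in_setD a0K /= andbF.
    have sP : W :&: (W' :\ z) \subset W'.
      by apply/subsetP => u; rewrite !inE => /andP [_ /andP [_ ->]].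
    apply: connect_trans (conn_mono sP H1) _.
    rewrite bz in H6; apply: conn_edge H6 => //.
    by move: a0P; rewrite in_setD1 => /andP [].
  have := IH W' cardW' xW' cW'; rewrite nbE; clean; lia.
have [B [bB sB]] := block_exists nS.
have xB : x \in B by rewrite (subsetP sB) // !inE eqxx.
have sWB : W \subset B by apply: subset_trans sB; apply: subsetUr.
have cWB := subset_leq_card (nbhd_mono x sWB).
have cnW := subset_leq_card (subsetIl W [set u | e x u]).
have cxW : #|x |: W| = #|W|.+1 by rewrite cardsU1 xW.
have cB := subset_leq_card sB.
have nbW : #|nbhd_in e W x| <= #|W|.
  by apply: subset_leq_card; apply/subsetP => u; rewrite inE => /andP [].
case: (cac bB) => [[_ [_ H]] | [a [b [_ _ Bab]]] | [a Ba]].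
- by have := H x xB; clean; lia.
- by move: cB; rewrite Bab cards2; case: (a != b); clean; lia.
- by move: cB; rewrite Ba cards1; clean; lia.
Qed.

Lemma Fprop x (W : {set T}) : x \notin W -> connected_set e W ->
  #|nbhd_in e W x| <= 2.
Proof. by apply: (@Fprop_n #|W|.+1). Qed.


Definition closedw (U : {set T}) v (X : {set T}) :=
  forall a u, a \in X -> u \in U -> e a u -> (u \in X) || (u == v).

Lemma SL_n n (U : {set T}) v (X : {set T}) : #|X| < n -> v \in U -> v \notin X ->
  X \subset U -> X != set0 -> closedw U v X ->
  exists v' (X' : {set T}), [/\ v' \in U, v' \notin X', X' \subset U, X' != set0 &
     closedw U v' X'] /\ (forall y, y \in X' -> #|nbhd_in e U y| <= 2).
Proof.
elim: n v X => [//|n IH] v X Hn vU vX sXU X0 clX.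
case: (pickP [pred y in X | 2 < #|nbhd_in e U y|]) => [x /= /andP [xX Hx] | Hno]; last first.
  exists v, X; split=> // y yX; have := Hno y; rewrite /= yX /=; clean; lia.
have xv : x != v by apply: contraNneq vX => <-.
pose Y := (v |: X) :\ x.
pose C := [set u in Y | connect (induced_rel e Y) v u].
have vY : v \in Y by rewrite !inE eq_sym xv eqxx.
have vC : v \in C by rewrite inE vY connect0.
have xC : x \notin C by rewrite !inE eqxx.
have Cstep : forall a b, a \in C -> induced_rel e Y a b -> b \in C.
  move=> a b; rewrite inE => /andP [aY cva] Hab.
  by move: (Hab); rewrite inducedE => /and3P [_ bY _]; rewrite inE bY (connect_trans cva) // connect1.
have cC : connected_set e C.
  apply: (connected_from vC) => a; rewrite inE => /andP [aY cva].
  by rewrite conn_sym; apply: conn_closed cva.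
have FC := Fprop xC cC.
have /subsetPn [y yN yC] : ~~ (nbhd_in e U x \subset C).
  apply/negP => sub.
  have : nbhd_in e U x \subset nbhd_in e C x.
    apply/subsetP => u uN; rewrite inE (subsetP sub _ uN).
    by move: uN; rewrite inE => /andP [].
  by move/subset_leq_card; clean; lia.
have xU := subsetP sXU _ xX.
have inC : forall a u, a \in Y -> u \in Y -> e a u -> u \in C -> a \in C.
  move=> a u aY uY eau uC; apply: (Cstep u) => //.
  by rewrite inducedE uY aY esym.
pose X' := (X :\ x) :\: C.
have aYX : forall a, a \in X' -> a \in Y.
  by move=> a; rewrite !inE => /andP [_ /andP [-> ->]]; rewrite orbT.
have yX' : y \in X'.
  move: yN; rewrite inE => /andP [yU exy].
  have yx : y != x by apply: contraTneq exy => ->; rewrite eirr.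
  have := clX _ _ xX yU exy => /orP [yX|/eqP yv].
    by rewrite in_setD yC in_setD1 yx yX.
  by move: yC; rewrite yv vC.
have clX' : closedw U x X'.
  move=> a u aX' uU eau.
  have aX : a \in X by move: aX'; rewrite !inE => /andP [_ /andP [_ ->]].
  case ux: (u == x); first by rewrite orbT.
  have uY : u \in Y.
    by have := clX _ _ aX uU eau => /orP [uX|/eqP uv]; rewrite in_setD1 ux /= in_setU1 ?uX ?uv ?eqxx ?orbT.
  have uC : u \notin C.
    apply/negP => uC; have := inC _ _ (aYX _ aX') uY eau uC.
    by move: aX'; rewrite inE => /andP [/negP].
  have := clX _ _ aX uU eau => /orP [uX|/eqP uv].
    by rewrite in_setD uC in_setD1 ux uX.
  by move: uC; rewrite uv vC.
have sX'U : X' \subset U.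
  by apply/subsetP => a aX'; apply: (subsetP sXU); move: aX'; rewrite !inE => /andP [_ /andP [_ ->]].
have xX' : x \notin X' by rewrite !inE eqxx andbF.
have X'0 : X' != set0 by apply/set0Pn; exists y.
have cX' : #|X'| < n.
  have lt1 : #|X :\ x| < #|X| by rewrite (cardsD1 x X) xX add1n.
  rewrite ltnS in Hn.
  exact: leq_trans (leq_ltn_trans (subset_leq_card (subsetDl _ _)) lt1) Hn.
exact: IH cX' xU xX' sX'U X'0 clX'.
Qed.


Lemma SL (U : {set T}) : 1 < #|U| ->
  exists v' (X' : {set T}), [/\ v' \in U, v' \notin X', X' \subset U, X' != set0 &
     closedw U v' X'] /\ (forall y, y \in X' -> #|nbhd_in e U y| <= 2).
Proof.
move=> HU.
have [v vU] : exists v, v \in U by apply/set0Pn; rewrite -card_gt0; clean; lia.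
apply: (@SL_n #|U|.+1 U v (U :\ v)).
- by have := cardsD1 v U; clean; lia.
- done.
- by rewrite !inE eqxx.
- exact: subsetDl.
- by rewrite -card_gt0; have := cardsD1 v U; rewrite vU; clean; lia.
- by move=> a u _ uU _; rewrite !inE uU andbT; case: (u == v).
Qed.


Lemma nbhd_sub (S : {set T}) v : nbhd_in e S v \subset S.
Proof. by apply/subsetP => u; rewrite inE => /andP []. Qed.

Lemma nbhd_set0 v : nbhd_in e set0 v = set0.
Proof. by apply/setP => u; rewrite !inE. Qed.

Lemma deg_lt (U : {set T}) u : u \in U -> #|nbhd_in e U u| < #|U|.
Proof.
move=> uU; have : nbhd_in e U u \subset U :\ u.
  by apply/subsetP => w; rewrite !inE => /andP [-> euw]; rewrite andbT; apply: contraTneq euw => ->; rewrite eirr.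
move/subset_leq_card; have := cardsD1 u U; rewrite uU; clean; lia.
Qed.

Lemma dcount (P Q : {set T}) :
  \sum_(u in P) #|nbhd_in e Q u| = \sum_(y in Q) #|nbhd_in e P y|.
Proof.
have E : forall (A : {set T}) u, #|nbhd_in e A u| = \sum_(y in A) (e u y : nat).
  move=> A u; rewrite -sum1_card big_mkcond [RHS]big_mkcond /=.
  by apply: eq_bigr => y _; rewrite !inE; case: (y \in A); case: (e u y).
rewrite (eq_bigr _ (fun u _ => E Q u)) (eq_bigr _ (fun u _ => E P u)) exchange_big /=.
by apply: eq_bigr => y _; apply: eq_bigr => u _; rewrite esym.
Qed.

Variable k : nat.
Hypothesis hk : 2 <= k.

Definition okc (U D : {set T}) (c : T -> nat) :=
  forall u, u \in U :\: D -> #|nbhd_in e (U :\: D) u| <= c u.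
Definition wt (c : T -> nat) (A : {set T}) := \sum_(u in A) (k.+1 - c u).

Lemma wt_ge c (A : {set T}) : (forall u, u \in A -> c u <= k) -> #|A| <= wt c A.
Proof.
move=> H; rewrite -sum1_card /wt; apply: leq_sum => u uA; have := H u uA; clean; lia.
Qed.

Lemma wt_split c (U A : {set T}) : A \subset U -> wt c U = wt c A + wt c (U :\: A).
Proof. by move=> sAU; rewrite /wt (big_setID A) /= (setIidPr sAU). Qed.

Lemma GR (U A DA : {set T}) (c : T -> nat) :
  (forall (U' : {set T}) (c' : T -> nat), #|U'| < #|U| -> U' != set0 -> (forall u, u \in U' -> c' u <= k) ->
     exists D : {set T}, D \subset U' /\ okc U' D c' /\ k.+1 * #|D| + 1 <= wt c' U') ->
  DA \subset A -> A \subset U -> A != set0 -> (forall u, u \in U -> c u <= k) ->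
  (forall u, u \in U :\: A -> #|nbhd_in e (A :\: DA) u| <= c u) ->
  (forall y, y \in A :\: DA -> #|nbhd_in e (U :\: DA) y| <= c y) ->
  k.+1 * #|DA| + \sum_(u in U :\: A) #|nbhd_in e (A :\: DA) u| + (U :\: A == set0) <= wt c A ->
  exists D : {set T}, D \subset U /\ okc U D c /\ k.+1 * #|D| + 1 <= wt c U.
Proof.
move=> IH sDA sAU A0 cap h1 h2 h3.
rewrite (wt_split c sAU).
case: (boolP (U :\: A == set0)) => U0.
  have eAU : A = U by apply/eqP; rewrite eqEsubset sAU -setD_eq0.
  move: h3; rewrite U0 (eqP U0) big_set0 /= addn0.
  exists DA; split; first by rewrite -eAU.
  split; last by clean; lia.
  by rewrite /okc -{1}eAU; exact: h2.
pose c' := fun u => c u - #|nbhd_in e (A :\: DA) u|.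
have cU' : #|U :\: A| < #|U|.
  have [a aA] := set0Pn _ A0.
  rewrite cardsD (setIidPr sAU); have := card_gt0 A; rewrite A0 => /eqP.
  have := subset_leq_card sAU; clean; lia.
have [D' [sD' [okD' cD']]] := IH (U :\: A) c' cU' U0
  ltac:(by move=> u /setDP [uU _]; rewrite /c'; have := cap u uU; lia).
exists (D' :|: DA); split.
  rewrite subUset (subset_trans sDA sAU) andbT.
  by apply: subset_trans sD' (subsetDl _ _).
split.
  move=> u /setDP [uU]; rewrite in_setU negb_or => /andP [uD' uDA].
  case uA: (u \in A).
    have uK : u \in A :\: DA by rewrite in_setD uDA uA.
    apply: leq_trans (h2 _ uK); apply: subset_leq_card; apply: nbhd_mono.
    by apply: setDS; apply: subsetUr.
  have uU' : u \in U :\: A by rewrite in_setD uA uU.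
  have := okD' u ltac:(by rewrite in_setD uD' uU'); have := h1 u uU'.
  have : nbhd_in e (U :\: (D' :|: DA)) u \subset
         nbhd_in e ((U :\: A) :\: D') u :|: nbhd_in e (A :\: DA) u.
    apply/subsetP => w; rewrite !inE => /andP [/andP [/norP [wD' wDA] wU] euw].
    by rewrite euw wD' wU wDA /= !andbT; case: (w \in A).
  move/subset_leq_card; rewrite cardsU /c'; clean; lia.
have cUD : #|D' :|: DA| <= #|D'| + #|DA| by rewrite cardsU; clean; lia.
have wE : wt c' (U :\: A) = wt c (U :\: A) + \sum_(u in U :\: A) #|nbhd_in e (A :\: DA) u|.
  rewrite /wt -big_split /=; apply: eq_bigr => u uU'.
  have := h1 u uU'; have := cap u (subsetP (subsetDl _ _) _ uU'); rewrite /c'; clean; lia.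
move: h3; rewrite (negbTE U0) addn0 => h3.
have : k.+1 * #|D' :|: DA| <= k.+1 * #|D'| + k.+1 * #|DA| by rewrite -mulnDr leq_mul2l cUD orbT.
move: cD'; rewrite wE; clean; lia.
Qed.


Definition IHt (U : {set T}) := forall (U' : {set T}) (c' : T -> nat), #|U'| < #|U| ->
  U' != set0 -> (forall u, u \in U' -> c' u <= k) ->
  exists D : {set T}, D \subset U' /\ okc U' D c' /\ k.+1 * #|D| + 1 <= wt c' U'.
Definition goalt (U : {set T}) c :=
  exists D : {set T}, D \subset U /\ okc U D c /\ k.+1 * #|D| + 1 <= wt c U.

Lemma nbr_facts (U : {set T}) y z z' : nbhd_in e U y = [set z; z'] ->
  [/\ z \in U, e y z, z' \in U & e y z'] /\ (y != z /\ y != z').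
Proof.
move=> Ny.
have zN : z \in nbhd_in e U y by rewrite Ny !inE eqxx.
have z'N : z' \in nbhd_in e U y by rewrite Ny !inE eqxx orbT.
move: (zN) (z'N); rewrite !inE => /andP [zU eyz] /andP [z'U eyz'].
split=> //; split; [apply: contraTneq eyz => <- | apply: contraTneq eyz' => <-]; by rewrite eirr.
Qed.

Lemma Ri (U : {set T}) c y z z' : IHt U -> (forall u, u \in U -> c u <= k) ->
  (forall u, u \in U -> 0 < c u) -> y \in U -> c y = 1 ->
  nbhd_in e U y = [set z; z'] -> z != z' -> c z < k -> goalt U c.
Proof.
move=> IH cap cpos yU cy Ny zz' czk.
have [[zU eyz z'U eyz'] [yz yz']] := nbr_facts Ny.
have z'y : z' != y by rewrite eq_sym.
have z'z : z' != z by rewrite eq_sym.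
have KE : [set y; z] :\ z = [set y].
  apply/setP => w; rewrite !inE; case: (eqVneq w z) => [->|wz] /=.
    by rewrite eq_sym (negbTE yz).
  by rewrite orbF.
have z'A : z' \in U :\: [set y; z] by rewrite !inE (negbTE z'y) (negbTE z'z) z'U.
have yNz : y \notin [set z] by rewrite in_set1.
apply: (@GR U [set y; z] [set z] c IH).
- by rewrite sub1set !inE eqxx orbT.
- by rewrite subUset !sub1set yU zU.
- by apply/set0Pn; exists y; rewrite !inE eqxx.
- exact: cap.
- rewrite KE => u /setDP [uU _]; apply: leq_trans (cpos u uU).
  by have := subset_leq_card (nbhd_sub [set y] u); rewrite cards1.
- rewrite KE => w; rewrite in_set1 => /eqP ->.
  rewrite cy; have : nbhd_in e (U :\ z) y \subset [set z'].
    apply/subsetP => w'; rewrite !inE => /andP [/andP [wz wU] eyw].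
    have : w' \in nbhd_in e U y by rewrite inE wU eyw.
    by rewrite Ny !inE (negbTE wz).
  by move/subset_leq_card; rewrite cards1.
- rewrite KE cards1 muln1.
  have -> : (U :\: [set y; z] == set0) = false by apply/negbTE/set0Pn; exists z'.
  rewrite dcount big_set1 /wt (big_setU1 _ yNz) big_set1 /=.
  have : nbhd_in e (U :\: [set y; z]) y \subset [set z'].
    apply/subsetP => w; rewrite !inE => /andP [/andP [wyz wU] eyw].
    have : w \in nbhd_in e U y by rewrite inE wU eyw.
    by rewrite Ny !inE; move: wyz; rewrite negb_or => /andP [_ /negbTE ->].
  move/subset_leq_card; rewrite cards1 cy; have := cap z zU; clean; lia.
Qed.

Lemma Rw (U : {set T}) c y z z' : IHt U -> (forall u, u \in U -> c u <= k) ->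
  (forall u, u \in U -> 0 < c u) -> y \in U -> c y = 1 ->
  nbhd_in e U y = [set z; z'] -> z != z' -> c z = k -> #|nbhd_in e U z| <= 2 -> goalt U c.
Proof.
move=> IH cap cpos yU cy Ny zz' cz dz.
have [[zU eyz z'U eyz'] [yz yz']] := nbr_facts Ny.
have z'y : z' != y by rewrite eq_sym.
have z'z : z' != z by rewrite eq_sym.
have z'nA : z' \notin [set y; z] by rewrite !inE negb_or z'y z'z.
have yNz : y \notin [set z] by rewrite in_set1.
have KE : (z' |: [set y; z]) :\ z' = [set y; z] := setU1K z'nA.
have nbrA : forall w, w \in U -> e y w -> w \in z' |: [set y; z].
  move=> w wU eyw; have : w \in nbhd_in e U y by rewrite inE wU eyw.
  by rewrite Ny !inE => /orP [->|->]; rewrite ?orbT.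
apply: (@GR U (z' |: [set y; z]) [set z'] c IH).
- by rewrite sub1set setU11.
- by rewrite subUset sub1set z'U subUset !sub1set yU zU.
- by apply/set0Pn; exists z'; rewrite setU11.
- exact: cap.
- rewrite KE => u /setDP [uU uA]; apply: leq_trans (cpos u uU).
  have : nbhd_in e [set y; z] u \subset [set z].
    apply/subsetP => w; rewrite !inE => /andP [/orP [/eqP wy|->//] euw].
    by move: uA; rewrite nbrA // -wy esym.
  by move/subset_leq_card; rewrite cards1.
- rewrite KE => w; rewrite !inE => /orP [/eqP ->|/eqP ->].
    rewrite cy; have : nbhd_in e (U :\ z') y \subset [set z].
      apply/subsetP => w'; rewrite !inE => /andP [/andP [wz' wU] eyw].
      have : w' \in nbhd_in e U y by rewrite inE wU eyw.
      by rewrite Ny !inE (negbTE wz') orbF.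
    by move/subset_leq_card; rewrite cards1.
  rewrite cz; apply: leq_trans hk; apply: leq_trans dz.
  by apply: subset_leq_card; apply: nbhd_mono; apply: subsetDl.
- rewrite KE cards1 muln1 dcount (big_setU1 _ yNz) big_set1 /=.
  have -> : nbhd_in e (U :\: (z' |: [set y; z])) y = set0.
    apply/setP => w; rewrite !inE; apply/negP => /andP [/andP [wA wU] eyw].
    by have := nbrA w wU eyw; rewrite !inE (negbTE wA).
  rewrite cards0 add0n.
  have Hs : #|nbhd_in e (U :\: (z' |: [set y; z])) z| + (U :\: (z' |: [set y; z]) == set0) <= 1.
    case: (boolP (U :\: (z' |: [set y; z]) == set0)) => [/eqP->|_].
      by rewrite nbhd_set0 cards0.
    have : nbhd_in e (U :\: (z' |: [set y; z])) z \subset nbhd_in e U z :\ y.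
      apply/subsetP => w; rewrite !inE => /andP [/andP [wA wU] ezw].
      rewrite wU ezw !andbT; apply: contraNneq wA => ->; by rewrite !eqxx !orbT.
    move/subset_leq_card; have := cardsD1 y (nbhd_in e U z).
    rewrite inE yU esym eyz /=; clean; lia.
  rewrite /wt (big_setU1 _ z'nA) (big_setU1 _ yNz) big_set1 /=.
  move: Hs (cap z' z'U); rewrite cy cz => h1 h2; clear -h1 h2; clean; lia.
Qed.


Lemma mainW n (U : {set T}) (c : T -> nat) : #|U| < n -> U != set0 ->
  (forall u, u \in U -> c u <= k) -> goalt U c.
Proof.
elim: n U c => [//|n IHn] U c Hn U0 cap.
have IH : IHt U.
  by move=> U' c' h; apply: IHn; apply: leq_trans h Hn.
case: (boolP [forall u in U, #|nbhd_in e U u| <= c u]) => [/forall_inP sat | /forall_inPn unsat].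
  exists set0; split; first exact: sub0set.
  split; first by rewrite /okc setD0 => u /sat.
  rewrite cards0 muln0 add0n; apply: leq_trans (wt_ge cap).
  by rewrite card_gt0.
have [u0 u0U u0bad] := unsat; rewrite -ltnNge in u0bad.
have U2 : 1 < #|U| by have := deg_lt u0U; clean; lia.
case: (pickP [pred y in U | c y == 0]) => [y /andP [yU /eqP cy0] | Hc0].
  apply: (@GR U [set y] [set y] c IH).
  - exact: subxx.
  - by rewrite sub1set.
  - by apply/set0Pn; exists y; rewrite set11.
  - exact: cap.
  - by rewrite setDv => u _; rewrite nbhd_set0 cards0.
  - by rewrite setDv => w; rewrite inE.
  - rewrite setDv big1 => [|u _]; last by rewrite nbhd_set0 cards0.
    have -> : (U :\: [set y] == set0) = false.
      by apply/negbTE; rewrite -card_gt0; have := cardsD1 y U; rewrite yU; clean; lia.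
    by rewrite /wt big_set1 cards1 cy0; clean; lia.
have cpos : forall u, u \in U -> 0 < c u.
  by move=> u uU; have := Hc0 u; rewrite /= uU /=; case: (c u).
have [v [X [[vU vX sXU X0 clX] deg2]]] := SL U2.
have capX : forall u, u \in X -> c u <= k by move=> u uX; apply: cap; apply: (subsetP sXU).
have nbX : forall u, u \in U -> u \notin X -> u != v -> nbhd_in e X u = set0.
  move=> u uU uX uv; apply/setP => a; rewrite !inE; apply/negP => /andP [aX eua].
  by have := clX a u aX uU ltac:(by rewrite esym) => /orP [H|H]; [move: uX; rewrite H | move: uv; rewrite H].
case: (boolP [forall y in X, #|nbhd_in e U y| <= c y]) => [/forall_inP satX | /forall_inPn unsatX].
  have cvX : #|nbhd_in e X v| <= wt c X.
    by apply: leq_trans (wt_ge capX); apply: subset_leq_card; apply: nbhd_sub.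
  case: (leqP #|nbhd_in e X v| (c v)) => Htv.
    apply: (@GR U X set0 c IH).
    - exact: sub0set.
    - exact: sXU.
    - exact: X0.
    - exact: cap.
    - rewrite setD0 => u /setDP [uU uX]; case: (eqVneq u v) => [->//|uv].
      by rewrite (nbX _ uU uX uv) cards0.
    - by rewrite !setD0 => y /satX.
    - rewrite cards0 muln0 add0n setD0.
      have vUX : v \in U :\: X by rewrite in_setD vX vU.
      have -> : (U :\: X == set0) = false by apply/negbTE/set0Pn; exists v.
      rewrite (big_setD1 v vUX) /= big1 ?addn0 // => u; rewrite in_setD1 in_setD => /and3P [uv uX uU].
      by rewrite (nbX _ uU uX uv) cards0.
  apply: (@GR U (v |: X) [set v] c IH).
  - by rewrite sub1set setU11.
  - by rewrite subUset sub1set vU sXU.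
  - by apply/set0Pn; exists v; rewrite setU11.
  - exact: cap.
  - rewrite setU1K // => u /setDP [uU]; rewrite in_setU1 negb_or => /andP [uv uX].
    by rewrite nbX ?cards0.
  - rewrite setU1K // => y yX; apply: leq_trans (satX y yX).
    by apply: subset_leq_card; apply: nbhd_mono; apply: subsetDl.
  - rewrite setU1K // cards1 muln1 big1 => [|u /setDP [uU]]; last first.
      by rewrite in_setU1 negb_or => /andP [uv uX]; rewrite nbX ?cards0.
    rewrite /wt (big_setU1 _ vX) /= -/(wt c X).
    have := cap v vU; case: (_ == set0); clean; lia.
have [y yX ybad] := unsatX; rewrite -ltnNge in ybad.
have yU := subsetP sXU _ yX.
have dy := deg2 y yX.
have cy : c y = 1 by have := cpos y yU; clean; lia.
have /cards2P [z1 [z2 [z12 Ny]]] : #|nbhd_in e U y| == 2 by apply/eqP; clean; lia.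
have R : forall z z', z != z' -> nbhd_in e U y = [set z; z'] -> z \in X -> goalt U c.
  move=> z z' zz' Nyz zX.
  have zU := subsetP sXU _ zX.
  case: (ltnP (c z) k) => czk.
    exact: (Ri IH cap cpos yU cy Nyz zz' czk).
  have cz : c z = k by apply/eqP; rewrite eqn_leq (cap z zU) czk.
  exact: (Rw IH cap cpos yU cy Nyz zz' cz (deg2 z zX)).
have [[z1U eyz1 z2U eyz2] _] := nbr_facts Ny.
case z1X: (z1 \in X); first exact: R z1 z2 z12 Ny z1X.
have z1v : z1 == v by have := clX y z1 yX z1U eyz1; rewrite z1X.
have z2X : z2 \in X.
  have := clX y z2 yX z2U eyz2 => /orP [//|/eqP z2v].
  by move: z12; rewrite (eqP z1v) z2v eqxx.
apply: (R z2 z1) => //; first by rewrite eq_sym.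
by rewrite Ny setUC.
Qed.

End Conn.

Unset Implicit Arguments. Set Strict Implicit.

Theorem lemma4p4 (T : finType) (e : rel T) (k : nat) :
  2 <= k -> 0 < #|T| -> simple_graph e -> cactus e ->
  (k * #|T|) %/ k.+1 + 1 <= alpha_k e k.
Proof.
move=> hk hT [esym eirr] cac.
have T0 : [set: T] != set0 by rewrite -card_gt0 cardsT.
have [D [_ [okD cD]]] := @mainW T e esym eirr cac k hk #|T|.+1 [set: T] (fun _ => k)
  ltac:(by rewrite cardsT) T0 (fun _ _ => leqnn k).
have wE : wt k (fun _ => k) [set: T] = #|T|.
  by rewrite /wt subSnn sum1_card cardsT.
rewrite wE in cD.
have sp : k_sparse e k (~: D).
  apply/forall_inP => v vD; move: (okD v); rewrite setTD => H; exact: H vD.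
have Ha : #|T| - #|D| <= alpha_k e k.
  by rewrite -{1}[D]setCK -cardsCs /alpha_k; apply: (@leq_bigmax_cond _ (fun S : {set T} => k_sparse e k S) (fun S : {set T} => #|S|) _ sp).
apply: leq_trans Ha.
move: cD (leq_divM (k * #|T|) k.+1).
move: ((k * #|T|) %/ k.+1) (#|T|) (#|D|) => q n d; clear; nia.
Qed.
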